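(* Let $z_{1},\ldots,z_{D'}$ be distinct points of $\mathbb{R}^{d}$ and let $D^{+}\geq2D'-1$. Consider the multivariate Hermite matrix whose columns are indexed by $\alpha\in\mathcal{I}_{D^{+}}$ and whose rows are the $D'$ rows $(p_{\alpha}(z_{i}))_{\alpha}$, $i=1,\ldots,D'$, followed by the $dD'$ rows given by the gradients $(\nabla p_{\alpha}(z_{i}))_{\alpha}$, $i=1,\ldots,D'$ (each gradient contributing $d$ rows, one per partial derivative). Then the rank of this matrix equals its number of rows, $D'(d+1)$.
   Context: For a multi-index $\alpha=(\alpha_{1},\ldots,\alpha_{d})\in\mathbb{Z}_{\geq0}^{d}$, $p_{\alpha}(z)=\prod_{i=1}^{d}(\pi_{i}z)^{\alpha_{i}}$, where $\pi_{i}$ is the $i$-th coordinate, and $|\alpha|=\sum_i\alpha_i$. $\mathcal{I}_{D^{+}}$ is the set of all multi-indices with $|\alpha|\leq D^{+}$. *)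

(* Defs.v *)
From HB Require Import structures.
From mathcomp Require Import all_boot all_order all_algebra.
From mathcomp Require Import ssrnum reals.
From mathcomp Require Import mpoly.
Set Implicit Arguments. Unset Strict Implicit. Unset Printing Implicit Defensive.
Import Order.TTheory GRing.Theory Num.Theory.
Local Open Scope ring_scope.

(* Multi-indices alpha in Z_{>=0}^d with |alpha| <= Dp, i.e. the set I_{D+}:
   monomials of total degree < Dp.+1. *)
Notation multi_index d Dp := ('X_{1..d < Dp.+1}).

Definition ncols (d Dp : nat) : nat := #|{: multi_index d Dp}|.

Definition col_alpha (d Dp : nat) (k : 'I_(ncols d Dp)) : multi_index d Dp :=
  enum_val k.

Definition p_alpha (R : ringType) (d : nat) (a : 'X_{1..d}) : {mpoly R[d]} :=
  'X_[a].

Definition ev (R : comRingType) (d : nat) (z : 'rV[R]_d) (p : {mpoly R[d]}) : R :=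
  p.@[fun j => z 0 j].

Definition value_block (R : comRingType) (d Dp D' : nat) (z : 'I_D' -> 'rV[R]_d)
  : 'M[R]_(D', ncols d Dp) :=
  \matrix_(i < D', k < ncols d Dp) ev (z i) (p_alpha R (col_alpha k)).

Definition grad_block (R : comRingType) (d Dp : nat) (zi : 'rV[R]_d)
  : 'M[R]_(d, ncols d Dp) :=
  \matrix_(j < d, k < ncols d Dp) ev zi (mderiv j (p_alpha R (col_alpha k))).

Definition hermite_matrix (R : comRingType) (d Dp D' : nat)
  (z : 'I_D' -> 'rV[R]_d) : 'M[R]_(D' + \sum_(i < D') d, ncols d Dp) :=
  col_mx (value_block Dp z) (\mxcol_(i < D') grad_block Dp (z i)).

(* Main.v *)
Require Import Defs.
From HB Require Import structures.
From mathcomp Require Import all_boot all_order all_algebra.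
From mathcomp Require Import ssrnum reals.
From mathcomp Require Import mpoly.
From mathcomp Require Import zify.
Import Order.TTheory GRing.Theory Num.Theory.
Local Open Scope ring_scope.
Set Implicit Arguments. Unset Strict Implicit.

Section S.
Variables (R : realType) (d : nat).
Implicit Types (p q r : {mpoly R[d]}) (a : 'I_d -> R).

Definition dvan a p := p.@[a] = 0 /\ forall l, (mderiv l p).@[a] = 0.

Lemma dvanM a p r : dvan a p -> dvan a (p * r).
Proof.
move=> [h1 h2]; split; first by rewrite mevalM h1 mul0r.
by move=> l; rewrite mderivM mevalD !mevalM h1 h2 !mul0r addr0.
Qed.

Lemma msizeM_le' p r : (msize (p * r) <= (msize p + msize r).-1)%N.
Proof.
have [->|nz_p] := eqVneq p 0; first by rewrite mul0r msize0.
have [->|nz_r] := eqVneq r 0; first by rewrite mulr0 msize0.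
by rewrite msizeM.
Qed.

Lemma msize_lin k c : (msize ('X_k - c%:MP : {mpoly R[d]}) <= 2)%N.
Proof.
apply: leq_trans (msizeD_le _ _) _; rewrite msizeN msizeC geq_max.
rewrite msizeX mdeg1.
by case: (c != 0).
Qed.


Lemma mderiv_lin_ev a k l c : (mderiv l ('X_k - c%:MP : {mpoly R[d]})).@[a] = (k == l)%:R.
Proof.
rewrite mderivB mderivC subr0 mderivX mevalZ mnm1E.
case: eqP => [->|_]; last by rewrite mul0r.
have -> : (U_(l) - U_(l) = 0 :> 'X_{1..d})%MM by rewrite -{1}(add0m U_(l))%MM addmK.
by rewrite mpolyX0 meval1 mulr1.
Qed.

Lemma msize_prod_seq (I : Type) (s : seq I) (F : I -> {mpoly R[d]}) :
  (forall j, msize (F j) <= 3)%N -> (msize (\prod_(j <- s) F j) <= 2 * size s + 1)%N.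
Proof.
move=> hF; elim: s => [|x s IH]; first by rewrite big_nil msize1.
rewrite big_cons; apply: leq_trans (msizeM_le' _ _) _.
have := leq_add (hF x) IH; rewrite /= mulnS.
by case: (msize (F x) + _)%N => //= n; rewrite -[(n <= _)%N]ltnS => /leq_trans; apply; rewrite addnC !addSn.
Qed.
Lemma meval_sum a (I : Type) (s : seq I) (P : pred I) (F : I -> {mpoly R[d]}) :
  (\sum_(i <- s | P i) F i).@[a] = \sum_(i <- s | P i) (F i).@[a].
Proof. exact: raddf_sum. Qed.

Lemma mderiv_sum l (I : Type) (s : seq I) (P : pred I) (F : I -> {mpoly R[d]}) :
  mderiv l (\sum_(i <- s | P i) F i) = \sum_(i <- s | P i) mderiv l (F i).
Proof. exact: raddf_sum. Qed.

End S.

Section T.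
Variables (R : realType) (d D' Dp : nat) (z : 'I_D' -> 'rV[R]_d).
Hypothesis hz : injective z.

Definition zz (i : 'I_D') : 'I_d -> R := fun j => z i 0 j.
Definition qq (j : 'I_D') : {mpoly R[d]} := \sum_(k < d) ('X_k - (zz j k)%:MP) ^+ 2.
Definition LL (i : 'I_D') : {mpoly R[d]} := \prod_(j <- rem i (enum 'I_D')) qq j.
Definition Phi (u : 'I_D' -> R) (v : 'I_D' -> 'I_d -> R) (p : {mpoly R[d]}) : R :=
  \sum_i u i * p.@[zz i] + \sum_i \sum_l v i l * (mderiv l p).@[zz i].

Lemma dvan_q j : dvan (zz j) (qq j).
Proof.
split.
  rewrite /qq meval_sum big1 // => k _.
  by rewrite expr2 mevalM mevalB mevalXU mevalC subrr mul0r.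
move=> l; rewrite /qq mderiv_sum meval_sum big1 // => k _.
by rewrite expr2 mderivM mevalD !mevalM mevalB mevalXU mevalC subrr mulr0 mul0r addr0.
Qed.

Lemma dvan_L i j : j != i -> dvan (zz j) (LL i).
Proof.
move=> ji; rewrite /LL (big_rem j); first exact: dvanM (dvan_q j).
by rewrite (mem_rem_uniq _ (enum_uniq _)) inE ji mem_enum.
Qed.

Lemma L_ev i : (LL i).@[zz i] != 0.
Proof.
rewrite /LL (big_morph _ (mevalM _) (meval1 _)) prodf_seq_neq0.
apply/allP => j; rewrite (mem_rem_uniq _ (enum_uniq _)) inE => /andP[ji _] /=.
apply/negP => /eqP h0.
have h1 : forall k : 'I_d, (('X_k - (zz j k)%:MP) ^+ 2 : {mpoly R[d]}).@[zz i] = 0.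
  move: h0; rewrite /qq meval_sum => h0 k; apply: (psumr_eq0P _ h0) => // k' _.
  by rewrite expr2 mevalM -expr2 sqr_ge0.
have : z j = z i.
  apply/rowP => k; have := h1 k.
  rewrite expr2 mevalM mevalB mevalXU mevalC => /eqP.
  by rewrite mulf_eq0 orbb subr_eq0 => /eqP.
by move/hz => e; rewrite e eqxx in ji.
Qed.

Lemma msize_q j : (msize (qq j) <= 3)%N.
Proof.
apply: leq_trans (msize_sum _ _ _) _; apply/bigmax_leqP => k _.
rewrite expr2; apply: leq_trans (msizeM_le' _ _) _.
by have := leq_add (msize_lin k (zz j k)) (msize_lin k (zz j k)); case: (_ + _)%N.
Qed.

Lemma msize_L i : (msize (LL i) <= 2 * D'.-1 + 1)%N.
Proof.
apply: leq_trans (msize_prod_seq (rem i (enum 'I_D')) (@msize_q)) _.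
by rewrite size_rem ?mem_enum // size_enum_ord.
Qed.

Section Phi.
Variables (u : 'I_D' -> R) (v : 'I_D' -> 'I_d -> R).

Lemma PhiD p r : Phi u v (p + r) = Phi u v p + Phi u v r.
Proof.
rewrite /Phi; under eq_bigr do rewrite mevalD mulrDr.
under [X in _ + X = _]eq_bigr do (under eq_bigr do rewrite mderivD mevalD mulrDr; rewrite big_split).
by rewrite !big_split /= addrACA.
Qed.

Lemma Phi0 : Phi u v 0 = 0.
Proof.
rewrite /Phi big1 ?add0r => [|i _]; last by rewrite -(mpolyC0) mevalC mulr0.
by rewrite big1 // => i _; rewrite big1 // => l _; rewrite -(mpolyC0) mderivC mevalC mulr0.
Qed.

Lemma PhiZ c p : Phi u v (c *: p) = c * Phi u v p.
Proof.
rewrite /Phi mulrDr !mulr_sumr; congr (_ + _); apply: eq_bigr => i _.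
  by rewrite mevalZ mulrCA.
by rewrite mulr_sumr; apply: eq_bigr => l _; rewrite mderivZ mevalZ mulrCA.
Qed.

Lemma Phi_low : (forall m : 'X_{1..d}, (mdeg m < Dp.+1)%N -> Phi u v 'X_[m] = 0) ->
  forall p, (msize p <= Dp.+1)%N -> Phi u v p = 0.
Proof.
move=> hm p hp; rewrite (mpolyE p) (big_morph _ PhiD Phi0) big1_seq // => m /= hmp.
by rewrite PhiZ hm ?mulr0 // (leq_trans (msize_mdeg_lt hmp)).
Qed.

Hypothesis hDp : (2 * D' - 1 <= Dp)%N.
Hypothesis hPhi : forall p, (msize p <= Dp.+1)%N -> Phi u v p = 0.

Lemma v0 i k : v i k = 0.
Proof.
set T := LL i * ('X_k - (zz i k)%:MP).
have hT : (msize T <= Dp.+1)%N.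
  apply: leq_trans (msizeM_le' _ _) _.
  have := leq_add (msize_L i) (msize_lin k (zz i k)).
  have : (0 < D')%N := leq_ltn_trans (leq0n i) (ltn_ord i).
  move: (msize _) (msize _) => a b; lia.
have := hPhi hT; rewrite /Phi big1 => [|j _]; last first.
  have [->|ji] := eqVneq j i.
    by rewrite mevalM mevalB mevalXU mevalC subrr mulr0 mulr0.
  by case: (dvanM ('X_k - (zz i k)%:MP) (dvan_L ji)) => -> _; rewrite mulr0.
rewrite add0r (bigD1 i) //= [X in _ + X]big1 ?addr0 => [|j ji]; last first.
  by apply: big1 => l _; case: (dvanM ('X_k - (zz i k)%:MP) (dvan_L ji)) => _ ->; rewrite mulr0.
rewrite (bigD1 k) //= big1 ?addr0 => [|l lk]; last first.
  rewrite mderivM mevalD !mevalM mevalB mevalXU mevalC subrr mulr0 add0r mderiv_lin_ev.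
  by rewrite eq_sym (negbTE lk) mulr0 mulr0.
rewrite mderivM mevalD !mevalM mevalB mevalXU mevalC subrr mulr0 add0r mderiv_lin_ev eqxx mulr1.
by move/eqP; rewrite mulf_eq0 (negbTE (L_ev i)) orbF => /eqP.
Qed.

Lemma u0 i : u i = 0.
Proof.
have hT : (msize (LL i) <= Dp.+1)%N.
  have := msize_L i; have : (0 < D')%N := leq_ltn_trans (leq0n i) (ltn_ord i).
  move: (msize _) => a; lia.
have := hPhi hT; rewrite /Phi [X in _ + X]big1 ?addr0 => [|j _]; last first.
  by apply: big1 => l _; rewrite v0 mul0r.
rewrite (bigD1 i) //= big1 ?addr0 => [|j ji]; last first.
  by case: (dvan_L ji) => -> _; rewrite mulr0.
by move/eqP; rewrite mulf_eq0 (negbTE (L_ev i)) orbF => /eqP.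
Qed.

End Phi.
End T.

Lemma hermite_Phi (R : realType) (d D' Dp : nat) (z : 'I_D' -> 'rV[R]_d)
  (w : 'rV[R]_(D' + \sum_(i < D') d)) :
  w *m hermite_matrix Dp z = 0 ->
  forall m : 'X_{1..d}, (mdeg m < Dp.+1)%N ->
  Phi z (fun i => lsubmx w 0 i) (fun i l => submxrow (rsubmx w) i 0 l) 'X_[m] = 0.
Proof.
move=> hw m hm.
pose k : 'I_(ncols d Dp) := enum_rank (BMultinom hm : multi_index d Dp).
have e : w = row_mx (lsubmx w) (rsubmx w) by rewrite hsubmxK.
move: hw; rewrite {1}e /hermite_matrix mul_row_col.
rewrite -[X in _ + X *m _](submxrowK (rsubmx w)) mul_mxrow_mxcol.
move/matrixP => /(_ 0 k); rewrite !mxE summxE.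
have ek : col_alpha k = BMultinom hm by rewrite /col_alpha /k enum_rankK.
move=> h; rewrite /Phi -[RHS]h; congr (_ + _).
  by apply: eq_bigr => i _; rewrite [X in _ = _ * X]mxE /ev /p_alpha ek.
apply: eq_bigr => i _; rewrite [RHS]mxE; apply: eq_bigr => l _.
by rewrite [X in _ = _ * X]mxE /ev /p_alpha ek.
Qed.

Unset Implicit Arguments. Set Strict Implicit.

Theorem lemma5 (R : realType) (d D' Dp : nat) (z : 'I_D' -> 'rV[R]_d) :
  injective z -> (2 * D' - 1 <= Dp)%N ->
  \rank (hermite_matrix Dp z) = (D' * (d + 1))%N.
Proof.
move=> hz hDp.
have hrf : row_free (hermite_matrix Dp z).
  apply: inj_row_free => w hw.
  have hP := @Phi_low _ _ _ _ _ _ _ (@hermite_Phi _ _ _ _ _ _ hw).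
  have hu := u0 hz hDp hP; have hv := v0 hz hDp hP.
  rewrite -[w]hsubmxK -[rsubmx w]submxrowK.
  have -> : lsubmx w = 0 by apply/rowP => i; rewrite hu mxE.
  have -> : \mxrow_i submxrow (rsubmx w) i = \mxrow_i (0 : 'rV[R]_d).
    by apply: eq_mxrow => i; apply/rowP => l; rewrite hv mxE.
  rewrite mxrow0.
  by rewrite row_mx0.
move/eqP: hrf ->; rewrite big_const_ord iter_addn_0; lia.
Qed.
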